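(* Let $n\ge 3$. For every initial coloring of the cycle $C_n$, the stabilization time of the Majority Model (MM) is at most $\lceil n/2\rceil-1$, and this bound is tight, i.e., there is an initial coloring of $C_n$ for which the stabilization time equals $\lceil n/2\rceil-1$.
   Context: A coloring of a graph is a map from its nodes to $\{b,w\}$. In the Majority Model (MM), all nodes update simultaneously in each round: a node adopts the color strictly more frequent among its neighbors in the previous round, and keeps its current color in case of a tie. Since MM is deterministic and there are finitely many colorings, from any initial coloring the sequence of colorings eventually enters a cycle of colorings; the stabilization time is the number of rounds needed to reach this cycle. *)

(* Defs.v *)
From mathcomp Require Import all_boot.
Set Implicit Arguments. Unset Strict Implicit. Unset Printing Implicit Defensive.

(* Colorings of a finite graph: true = b, false = w. *)
Definition coloring (T : finType) := {ffun T -> bool}.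

Definition mm_step (T : finType) (adj : rel T) (c : coloring T) : coloring T :=
  [ffun v =>
     let nb := #|[pred u | adj v u && c u]| in
     let nw := #|[pred u | adj v u && ~~ c u]| in
     if nw < nb then true else if nb < nw then false else c v].

Definition mm_iter (T : finType) (adj : rel T) (t : nat) (c : coloring T) :=
  iter t (mm_step adj) c.

Definition mm_in_cycle (T : finType) (adj : rel T) (c : coloring T) (t : nat) :=
  exists p, 0 < p /\ mm_iter adj (t + p) c = mm_iter adj t c.

Definition is_stab_time (T : finType) (adj : rel T) (c : coloring T) (t : nat) :=
  mm_in_cycle adj c t /\ forall s, s < t -> ~ mm_in_cycle adj c s.

Definition cycle_adj (n : nat) : rel 'I_n :=
  fun i j => (j == (i.+1 %% n) :> nat) || (i == (j.+1 %% n) :> nat).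
Arguments cycle_adj : clear implicits.

(* Main.v *)
Require Import Defs.
From mathcomp Require Import all_boot zify.
Set Implicit Arguments. Unset Strict Implicit. Unset Printing Implicit Defensive.

Section S.
Variable n : nat.
Hypothesis hn : 3 <= n.
Local Notation s := (@ordS n).
Local Notation p := (@ord_pred n).

Lemma adjE v u : cycle_adj n v u = (u == s v) || (u == p v).
Proof.
rewrite /cycle_adj.
apply/orP/orP => [[/eqP h|/eqP h]|[/eqP h|/eqP h]].
- by left; apply/eqP/val_inj; exact: h.
- right; apply/eqP; rewrite -[u]ordSK; congr p; exact: val_inj.
- by left; rewrite h.
- right; rewrite h.
  change (nat_of_ord v == nat_of_ord (s (p v))); by rewrite ord_predK.
Qed.

Lemma sval_ (v : 'I_n) : nat_of_ord (s v) = if v.+1 == n then 0 else v.+1.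
Proof.
rewrite /= ; case: eqP => [->|h]; first by rewrite modnn.
by rewrite modn_small //; have := ltn_ord v; lia.
Qed.

Lemma pval_ (v : 'I_n) : nat_of_ord (p v) = if nat_of_ord v == 0 then n.-1 else v.-1.
Proof.
rewrite /=; case: eqP => [->|h].
  by rewrite add0n modn_small //; lia.
have hv := ltn_ord v.
have -> : (v + n).-1 = v.-1 + n by lia.
by rewrite modnDr modn_small //; lia.
Qed.

Lemma sp_neq v : s v != p v.
Proof.
apply/eqP => /(congr1 (@nat_of_ord n)); rewrite sval_ pval_.
have := ltn_ord v.
have := hn; case: eqP => h1; case: eqP => h2 /=; lia.

Qed.


Lemma cardb (x : coloring 'I_n) v b :
  #|[pred u | cycle_adj n v u && (x u == b)]| = (x (s v) == b) + (x (p v) == b).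
Proof.
have hsp := sp_neq v.
case Hs: (x (s v) == b); case Hp: (x (p v) == b).
- rewrite (eq_card (B := pred2 (s v) (p v))) ?card2 ?hsp // => u.
  rewrite !inE adjE; case: (eqVneq u (s v)) => [->|_]; first by rewrite Hs.
  by case: (eqVneq u (p v)) => [->|_] //; rewrite Hp.
- rewrite (eq_card (B := pred1 (s v))) ?card1 // => u.
  rewrite !inE adjE; case: (eqVneq u (s v)) => [->|_]; first by rewrite Hs.
  by case: (eqVneq u (p v)) => [->|_] //; rewrite Hp.
- rewrite (eq_card (B := pred1 (p v))) ?card1 // => u.
  rewrite !inE adjE; case: (eqVneq u (s v)) => [->|_]; first by rewrite Hs (negbTE hsp).
  by case: (eqVneq u (p v)) => [->|_] //; rewrite Hp.
- rewrite eq_card0 // => u.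
  rewrite !inE adjE; case: (eqVneq u (s v)) => [->|_]; first by rewrite Hs.
  by case: (eqVneq u (p v)) => [->|_] //; rewrite Hp.
Qed.

Lemma stepE (x : coloring 'I_n) v :
  mm_step (cycle_adj n) x v = if x (s v) == x (p v) then x (s v) else x v.
Proof.
rewrite ffunE /=.
have E1 : #|[pred u | cycle_adj n v u && x u]| = (x (s v) == true) + (x (p v) == true).
  by rewrite -cardb; apply: eq_card => u; rewrite !inE eqb_id.
have E2 : #|[pred u | cycle_adj n v u && ~~ x u]| = (x (s v) == false) + (x (p v) == false).
  by rewrite -cardb; apply: eq_card => u; rewrite !inE eqbF_neg.
rewrite E1 E2.
by case: (x (s v)); case: (x (p v)); case: (x v).
Qed.

Local Notation step := (mm_step (cycle_adj n)).
Definition st (x : coloring 'I_n) v := (x v == x (s v)) || (x v == x (p v)).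

Ltac gen7 x v := rewrite /st !stepE ?ordSK ?ord_predK;
  case: (x (p (p (p v)))); case: (x (p (p v))); case: (x (p v)); case: (x v);
  case: (x (s v)); case: (x (s (s v)));  case: (x (s (s (s v)))).

Lemma stepA x v : st x v -> step x v = x v /\ st (step x) v.
Proof. by gen7 x v. Qed.

Lemma stepC x v : st x v -> st (step x) (s v) /\ st (step x) (p v).
Proof. by gen7 x v. Qed.

Lemma stepD x v : ~~ st x (p v) -> ~~ st x v -> ~~ st x (s v) -> ~~ st (step x) v.
Proof. by gen7 x v. Qed.

Lemma stepB x v : ~~ st x v -> step x v = ~~ x v.
Proof. by gen7 x v. Qed.

Lemma stepFix x : (forall v, st x v) -> step x = x.
Proof. by move=> h; apply/ffunP => v; case: (stepA (h v)). Qed.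

Lemma stepNone x : (forall v, ~~ st x v) -> step (step x) = x.
Proof.
move=> h; apply/ffunP => v.
have hv := h v; have hs := h (s v); have hp := h (p v).
move: hv hs hp; rewrite /st !stepE ?ordSK ?ord_predK.
move: (h (s (s v))) (h (p (p v))); rewrite /st ?ordSK ?ord_predK.
by case: (x (p (p (p v)))); case: (x (p (p v))); case: (x (p v)); case: (x v);
  case: (x (s v)); case: (x (s (s v)));  case: (x (s (s (s v)))).
Qed.

Variable c : coloring 'I_n.
Local Notation X t := (iter t step c).

Lemma persist t k v : st (X t) v -> st (X (t + k)) v.
Proof. elim: k => [|k IH]; rewrite ?addn0 // addnS => /IH h; exact: (stepA h).2. Qed.

Lemma spreadF t j a : st (X t) a -> st (X (t + j)) (iter j s a).
Proof. elim: j => [|j IH]; rewrite ?addn0 // addnS => /IH h; exact: (stepC h).1. Qed.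

Lemma spreadB t j v : st (X t) (iter j s v) -> st (X (t + j)) v.
Proof.
elim: j v => [|j IH] v; rewrite ?addn0 // addnS iterSr => /IH h.
by have := (stepC h).2; rewrite ordSK.
Qed.

Lemma iter_val j (a : 'I_n) : nat_of_ord (iter j s a) = (a + j) %% n.
Proof.
elim: j => [|j IH] /=; first by rewrite addn0 modn_small.
by rewrite IH -addn1 modnDml addn1 addnS.
Qed.

Definition T := (n.+1)./2 - 1.

Lemma Tfacts : (odd n -> n = 2*T+1) /\ (~~ odd n -> n = 2*T+2).
Proof. rewrite /T; have := odd_double_half n.+1; have := hn. rewrite /= -!muln2. case: (odd n) => /=; lia. Qed.

Lemma allst a : st c a -> st c (s a) -> forall v, st (X T) v.
Proof.
move=> ha hsa v.
have [T1 T2] := Tfacts.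
have hT : n <= 2 * T + 2 by case: (boolP (odd n)) => [/T1|/T2]; lia.
have hv := ltn_ord v; have ha' := ltn_ord a.
pose j := if a <= v then v - a else v + n - a.
have hj : (a + j) %% n = v.
  rewrite /j; case: leqP => h.
    by rewrite modn_small; lia.
  have -> : a + (v + n - a) = v + n by lia.
  by rewrite modnDr modn_small.
case: (posnP j) => j0.
  have -> : v = a by apply: val_inj; rewrite /= -hj j0 addn0 modn_small.
  by have := @persist 0 T a ha; rewrite add0n.
case: (leqP j.-1 T) => hjT.
  have E : v = iter j.-1 s (s a).
    apply: val_inj; rewrite /= iter_val -hj sval_; case: eqP => h.
      have -> : a + j = (0 + j.-1) + n by lia.
      by rewrite modnDr.
    by have -> : a + j = a.+1 + j.-1 by lia.
  have := @spreadF 0 j.-1 (s a) hsa; rewrite add0n -E => H.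
  by have := persist (T - j.-1) H; rewrite subnKC.
have E : a = iter (n - j) s v.
  apply: val_inj; rewrite /= iter_val.
  have [->|->] : v + (n - j) = a + n \/ v + (n - j) = a by rewrite /j; case: leqP; lia.
    by rewrite modnDr modn_small.
  by rewrite modn_small.
rewrite E in ha.
have := @spreadB 0 (n - j) v ha; rewrite add0n => H.
by have := persist (T - (n - j)) H; rewrite subnKC //; lia.
Qed.

Lemma fixT a : st c a -> st c (s a) -> X T.+1 = X T.
Proof. move=> h1 h2; rewrite /= stepFix //; exact: allst h1 h2. Qed.

Lemma fixed_from : X T.+1 = X T -> forall m, X (T + m) = X T.
Proof.
move=> h; elim=> [|m IH]; first by rewrite addn0.
by rewrite addnS /= IH.
Qed.

Lemma in_cycleT : mm_in_cycle (cycle_adj n) c T.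
Proof.
rewrite /mm_in_cycle /mm_iter.
case: (pickP (fun v => st c v)) => [w hw|hno].
  exists 1; split => //; rewrite addn1.
  move: (hw); rewrite /st; case/orP => /eqP E.
    apply: (fixT hw); rewrite /st ordSK -E eqxx orbT //.
  apply: (@fixT (p w)); last by rewrite ord_predK.
  by rewrite /st ord_predK E eqxx.
exists 2; split => //.
rewrite iterD /= stepNone // => v; by rewrite hno.
Qed.
End S.

Theorem upper n (hn : 3 <= n) (c : coloring 'I_n) (t : nat) :
  is_stab_time (cycle_adj n) c t -> t <= (n.+1)./2 - 1.
Proof.
case=> _ h; rewrite leqNgt; apply/negP => /h; apply.
exact: (in_cycleT hn).
Qed.

Lemma t2 i : odd i = (i %% 2 == 1). Proof. by rewrite modn2; case: odd. Qed.

Section L.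
Variable n : nat.
Hypothesis hn : 3 <= n.
Local Notation s := (@ordS n).
Local Notation p := (@ord_pred n).
Definition c0 : coloring 'I_n := [ffun i : 'I_n => (nat_of_ord i == 0) || odd i].
Definition R := if odd n then n.-1 else n.-2.

Lemma base (i : 'I_n) : 2 <= i -> i <= R -> ~~ st c0 i.
Proof.
move=> h2 hR; have hi := ltn_ord i.
rewrite /st /c0 !ffunE (sval_ hn) (pval_ hn).
have -> : (nat_of_ord i == 0) = false by apply/eqP; lia.
have -> : (i.-1 == 0) = false by apply/eqP; lia.
have oi1 : odd i.-1 = ~~ odd i by case: (nat_of_ord i) h2 => [|k] //= _; rewrite negbK.
rewrite oi1 /=.
case: ifP => /eqP e1 /=.
  case oi: (odd i) => //.
  have on : odd n = false by rewrite -e1 /= oi.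
  move: hR; rewrite /R on; lia.

by rewrite /=; case: (odd i).
Qed.

Local Notation step := (mm_step (cycle_adj n)).

Lemma inst t (i : 'I_n) : t + 2 <= i -> i + t <= R -> ~~ st (iter t step c0) i.
Proof.
have hRn : R <= n.-1 by rewrite /R; case: (odd n); lia.
elim: t i => [|t IH] i h1 h2; first by apply: base; lia.
have hi := ltn_ord i.
rewrite iterS; apply: stepD => //; apply: IH; rewrite ?(pval_ hn) ?(sval_ hn);
  first [lia | (case: ifP => /eqP ?; lia)].
Qed.
End L.

Theorem theorem2p3 (n : nat) (hn : 3 <= n) :
  (forall (c : coloring 'I_n) (t : nat),
     is_stab_time (cycle_adj n) c t -> t <= (n.+1)./2 - 1) /\
  (exists c : coloring 'I_n, is_stab_time (cycle_adj n) c ((n.+1)./2 - 1)).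
Proof.
split; first exact: upper.
exists (c0 n); split; first exact: (in_cycleT hn).
change ((n.+1)./2 - 1) with (T n).
move=> s0 hs0 [p0 [hp0 E]].
rewrite /mm_iter in E.
have [Tf1 Tf2] := Tfacts hn.
have hT1 : 1 <= T n by case: (boolP (odd n)) => [/Tf1|/Tf2]; lia.
have hTn : T n < n by case: (boolP (odd n)) => [/Tf1|/Tf2]; lia.
set step := mm_step (cycle_adj n).
set T := T n in E hs0 Tf1 Tf2 hT1 hTn *.
have h0n : 0 < n by lia.
pose a := Ordinal h0n.
have hfix : iter T.+1 step (c0 n) = iter T step (c0 n).
  have e1 : (1 == n) = false by apply/eqP; lia.
  apply: (@fixT n hn (c0 n) a).
    by rewrite /st !ffunE (sval_ hn) e1.
  by rewrite /st ordSK !ffunE (sval_ hn) e1 /= orbT.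
have hff : forall m, iter (T + m) step (c0 n) = iter T step (c0 n) := fixed_from hfix.
have per : forall k, iter (s0 + k * p0) step (c0 n) = iter s0 step (c0 n).
  elim=> [|k IH]; first by rewrite mul0n addn0.
  have -> : s0 + k.+1 * p0 = k * p0 + (s0 + p0) by rewrite mulSn; lia.
  by rewrite iterD E -iterD addnC IH.
have hs : iter s0 step (c0 n) = iter T step (c0 n).
  rewrite -(per T).
  have -> : s0 + T * p0 = T + (s0 + T * p0 - T) by nia.
  exact: hff.
have hT' : iter T.-1 step (c0 n) = iter T step (c0 n).
  have -> : T.-1 = (T.-1 - s0) + s0 by lia.
  by rewrite iterD hs -iterD addnC hff.
have hi0 : T.+1 < n by case: (boolP (odd n)) => [/Tf1|/Tf2]; lia.
pose i0 := Ordinal hi0.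
have hns : ~~ st (iter T.-1 step (c0 n)) i0.
  apply: inst => //=; first lia.
  rewrite /R; case: (boolP (odd n)) => [o|o]; [move/Tf1: (o)|move/Tf2: (o)]; lia.
have := stepB hn hns; rewrite -iterS.
have -> : T.-1.+1 = T by lia.
by rewrite hT'; case: (iter T step (c0 n) i0).
Qed.
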